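(* Let $(E,\|\cdot\|_E)$, $(F,\|\cdot\|_F)$ be normed vector spaces, $\Omega\subseteq E$, $f:\Omega\to F$, and $\mathfrak{X}\subseteq\Omega$. Assume $f$ is $\beta$-Lipschitz on $\mathfrak{X}$, i.e. $\|f(x)-f(y)\|_F\le\beta\|x-y\|_E$ for all $x,y\in\mathfrak{X}$. Then for any $\eta>0$ and $\varepsilon>0$, $$\mathcal{N}(S^+_\eta[f(\mathfrak{X})],\|\cdot\|_F,\varepsilon)\le\mathcal{N}\Big(\mathfrak{X},\|\cdot\|_E,\frac{\eta}{16\beta}\varepsilon\Big)^2.$$
   Context: For a subset $\mathfrak{Y}$ of a normed space, $\mathcal{N}(\mathfrak{Y},\|\cdot\|,\varepsilon)$ is the minimal number of closed balls of radius $\varepsilon$ with centers in $\mathfrak{Y}$ needed to cover $\mathfrak{Y}$. The set of long chords is $S^+_\eta[f(\mathfrak{X})]=\{(f(x)-f(y))/\|f(x)-f(y)\|_F:\ x,y\in\mathfrak{X},\ \|f(x)-f(y)\|_F>\eta\}$. *)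

(* Defs.v *)
From HB Require Import structures.
From mathcomp Require Import all_boot all_order all_algebra finmap.
From mathcomp Require Import all_classical all_reals all_analysis.
Set Implicit Arguments. Unset Strict Implicit. Unset Printing Implicit Defensive.
Import Order.TTheory GRing.Theory Num.Theory.
Import numFieldNormedType.Exports.
Local Open Scope classical_set_scope.
Local Open Scope ring_scope.

Definition cball {R : realType} {V : normedModType R} (c : V) (e : R) : set V :=
  [set y | `|c - y| <= e].

Definition is_cover {R : realType} {V : normedModType R}
  (Y : set V) (e : R) (C : {fset V}) : Prop :=
  [set` C] `<=` Y /\ Y `<=` \bigcup_(c in [set` C]) cball c e.

(* covering number N(Y, ||.||, e): minimal number of closed e-balls with
   centres in Y covering Y (+oo if no finite cover exists) *)
Definition covering_number {R : realType} {V : normedModType R}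
  (Y : set V) (e : R) : \bar R :=
  ereal_inf [set ((#|` C|)%:R)%:E | C in [set C : {fset V} | is_cover Y e C]].

Definition long_chords {R : realType} {E F : normedModType R}
  (f : E -> F) (X : set E) (eta : R) : set F :=
  [set u | exists x y, X x /\ X y /\ eta < `|f x - f y| /\
                       u = `|f x - f y|^-1 *: (f x - f y)].

(* Main.v *)
Require Import Defs.
From HB Require Import structures.
From mathcomp Require Import all_boot all_order all_algebra finmap.
From mathcomp Require Import all_classical all_reals all_analysis.
From mathcomp Require Import ring lra.
Import Order.TTheory GRing.Theory Num.Theory.
Import numFieldNormedType.Exports.
Local Open Scope classical_set_scope.
Local Open Scope ring_scope.

Lemma chord_close (R : realType) (F : normedModType R) (a b : F) :
  0 < `|a| -> 0 < `|b| ->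
  `| `|a|^-1 *: a - `|b|^-1 *: b| <= 2 * `|a - b| / `|a|.
Proof.
move=> ha hb.
have hai : 0 < `|a|^-1 by rewrite invr_gt0.
have e1 : `|a|^-1 *: a - `|b|^-1 *: b
          = `|a|^-1 *: (a - b) + (`|a|^-1 - `|b|^-1) *: b.
  by rewrite scalerBr scalerBl addrA subrK.
rewrite e1; apply: (le_trans (ler_normD _ _)).
rewrite !normrZ (ger0_norm (ltW hai)).
have e2 : `| `|a|^-1 - `|b|^-1| * `|b| = `|a|^-1 * `| `|b| - `|a| |.
  have -> : `|a|^-1 * `| `|b| - `|a| | = `| `|a|^-1 * (`|b| - `|a|)|.
    by rewrite normrM (ger0_norm (ltW hai)).
  have -> : `| `|a|^-1 - `|b|^-1| * `|b| = `| (`|a|^-1 - `|b|^-1) * `|b| |.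
    by rewrite normrM (ger0_norm (ltW hb)).
  congr (`| _ |). by rewrite mulrBl mulrBr !mulVf ?gt_eqF.
rewrite e2.
have e3 : `| `|b| - `|a| | <= `|a - b|.
  by rewrite distrC (le_trans (ler_dist_dist _ _)).
have h : `|a|^-1 * `| `|b| - `|a| | <= `|a|^-1 * `|a - b|.
  by rewrite ler_pM2l.
rewrite mulrC; nra.
Qed.

Lemma sub_via {V : zmodType} (a b c : V) : a - b = (c - b) - (c - a).
Proof. by rewrite opprB [RHS]addrC addrA subrK. Qed.
Lemma sub_swap {V : zmodType} (a b c d : V) : (a - b) - (c - d) = (a - c) - (b - d).
Proof. by rewrite !opprB addrACA [RHS]addrACA [- b + _]addrC. Qed.

Lemma key_bound (R : realType) (E F : normedModType R)
  (f : E -> F) (X : set E) (beta : R) (hbeta : 0 < beta)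
  (hlip : forall x y, X x -> X y -> `|f x - f y| <= beta * `|x - y|)
  (eta eps : R) (heta : 0 < eta) (heps : 0 < eps) (C : {fset E}) :
  is_cover X (eta / (16 * beta) * eps) C ->
  (covering_number (long_chords f X eta) eps <= ((#|` C| * #|` C|)%N%:R)%:E)%E.
Proof.
set del := eta / (16 * beta) * eps.
have hdel : 0 < del by rewrite /del !mulr_gt0 ?invr_gt0 ?mulr_gt0.
move=> [hCX hcov].
case: (pselect (exists q : E * E, X q.1 /\ X q.2 /\ eta < `|f q.1 - f q.2|))
  => [[q0 hq0]|hnP]; last first.
  apply: ge_ereal_inf; exists ((#|` (fset0 : {fset F})|)%:R%:E); last first.
    by rewrite cardfs0 lee_fin ler0n.
  exists fset0 => //; split; first by move=> u /=; rewrite inE.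
  move=> u [x [y [Xx [Xy [hl _]]]]]; exfalso; apply: hnP; exists (x, y); done.
pose Q (c e : E) : set (E * E) := [set q | X q.1 /\ X q.2 /\ `|c - q.1| <= del
   /\ `|e - q.2| <= del /\ eta < `|f q.1 - f q.2|].
pose chord (q : E * E) := `|f q.1 - f q.2|^-1 *: (f q.1 - f q.2).
pose g c e := chord (xget q0 (Q c e)).
have gP : forall c e, X (xget q0 (Q c e)).1 /\ X (xget q0 (Q c e)).2 /\
    eta < `|f (xget q0 (Q c e)).1 - f (xget q0 (Q c e)).2|.
  move=> c e; case: xgetP => [q -> [? [? [_ [_ ?]]]]|_] //.
pose s := [seq g c e | c <- C, e <- C].
pose D := [fset u in s]%fset.
apply: ge_ereal_inf; exists ((#|` D|)%:R%:E); last first.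
  rewrite lee_fin ler_nat card_fseq (leq_trans (size_undup _)) //.
  by rewrite size_allpairs.
exists D => //; split.
  move=> u /=; rewrite inE => /allpairsP [[c e] [cC eC ->]] /=.
  have [h1 [h2 h3]] := gP c e.
  by exists (xget q0 (Q c e)).1, (xget q0 (Q c e)).2.
move=> u [x [y [Xx [Xy [hl ->]]]]].
have [c cC hc] := hcov x Xx.
have [e eC he] := hcov y Xy.
exists (g c e).
  by rewrite /= inE; apply/allpairsP; exists (c, e).
have Qxy : Q c e (x, y) by [].
rewrite /cball /= /g.
case: xgetP => [q qE [Xq1 [Xq2 [hq1 [hq2 hql]]]] | hn]; last first.
  by exfalso; apply: (hn (x, y)).
rewrite /chord /=.
have hx : `|q.1 - x| <= 2 * del.
  rewrite (sub_via _ _ c).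
  apply: (le_trans (ler_normB _ _)); rewrite /cball /= in hc; lra.
have hy : `|q.2 - y| <= 2 * del.
  rewrite (sub_via _ _ e).
  apply: (le_trans (ler_normB _ _)); rewrite /cball /= in he; lra.
have hab : `|(f q.1 - f q.2) - (f x - f y)| <= 4 * beta * del.
  rewrite sub_swap.
  apply: (le_trans (ler_normB _ _)).
  have := hlip _ _ Xq1 Xx; have := hlip _ _ Xq2 Xy; nra.
have e4 : 4 * beta * del = eta * eps / 4.
  by rewrite /del; field; rewrite gt_eqF.
rewrite e4 in hab.
apply: (le_trans (@chord_close _ _ (f q.1 - f q.2) (f x - f y) _ _)); try lra.
rewrite ler_pdivrMr; last lra.
nra.
Qed.

Theorem proposition1 (R : realType) (E F : normedModType R)
  (Omega : set E) (f : E -> F) (X : set E) (beta : R)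
  (hXO : X `<=` Omega) (hbeta : 0 < beta)
  (hlip : forall x y, X x -> X y -> `|f x - f y| <= beta * `|x - y|)
  (eta eps : R) (heta : 0 < eta) (heps : 0 < eps) :
  (covering_number (long_chords f X eta) eps
   <= covering_number X (eta / (16 * beta) * eps)
      * covering_number X (eta / (16 * beta) * eps))%E.
Proof.
set del := eta / (16 * beta) * eps.
case: (pselect (exists C, is_cover X del C)) => [[C0 hC0]|hnex].
  pose P := fun n => `[< exists C, is_cover X del C /\ #|` C| = n >].
  have exP : exists n, P n by exists #|` C0|; apply/asboolP; exists C0.
  case: (ex_minnP exP) => m /asboolP [C [hC hm]] hmin.
  have NX : covering_number X del = (m%:R)%:E.
    apply/eqP; rewrite eq_le; apply/andP; split.
      by apply: ereal_inf_lbound; exists C => //; rewrite hm.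
    apply/ereal_infP => _ [C' hC' <-]; rewrite lee_fin ler_nat.
    by apply: hmin; apply/asboolP; exists C'.
  rewrite NX -EFinM -natrM -hm.
  exact: (@key_bound _ _ _ f X beta hbeta hlip eta eps heta heps C hC).
have -> : covering_number X del = +oo%E.
  rewrite /covering_number; apply/ereal_inf_pinfty => y [C hC _].
  by exfalso; apply: hnex; exists C.
by rewrite mulyy leey.
Qed.
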